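(* $\mathrm{HS}_{\mathsf{lin}}\not\geq\mathrm{HS}_{\mathsf{st}}$ and $\mathrm{HS}_{\mathsf{lin}}\not\geq\mathrm{HS}_{\mathsf{ct}}$: there is an $\mathrm{HS}$ formula $\psi$ such that no $\mathrm{HS}$ formula $\varphi$ satisfies, for every finite Kripke structure $K$, $K\models_{\mathsf{lin}}\varphi$ iff $K\models_{\mathsf{st}}\psi$; and there is an $\mathrm{HS}$ formula $\psi'$ such that no $\mathrm{HS}$ formula $\varphi$ satisfies, for every finite Kripke structure $K$, $K\models_{\mathsf{lin}}\varphi$ iff $K\models_{\mathsf{ct}}\psi'$.
   Context: A Kripke structure over a finite set $\mathcal{AP}$ is $K=(\mathcal{AP},S,\delta,\mu,s_0)$ with states $S$, left-total $\delta\subseteq S\times S$, labelling $\mu:S\to2^{\mathcal{AP}}$, initial state $s_0$; finite if $S$ is finite. Infinite paths are infinite state sequences following $\delta$; traces are their non-empty finite prefixes; initial means starting at $s_0$. For a finite word $w=w(0)\cdots w(n)$, $\mathrm{Pref}(w)=\{w[0,i]\mid0\le i\le n-1\}$, $\mathrm{Suff}(w)=\{w[i,n]\mid1\le i\le n\}$. The computation tree $C(K)$ has as states the initial traces of $K$, initial state $s_0$, labelling $\rho\mapsto\mu(\text{last state of }\rho)$, transitions $(\rho,\rho\cdot s)$. $\mathrm{HS}$ formulas: $\psi::=p\mid\neg\psi\mid\psi\wedge\psi\mid\langle X\rangle\psi$ for the Allen relations $A,L,B,E,D,O$ and inverses; all definable (non-strict semantics) from $\langle B\rangle,\langle E\rangle,\langle\bar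 B\rangle,\langle\bar E\rangle$. State-based semantics over traces: $\rho\models p$ iff $p\in\mu(s)$ for every state $s$ of $\rho$; $\langle B\rangle\psi$: some $\rho'\in\mathrm{Pref}(\rho)$ satisfies $\psi$; $\langle E\rangle\psi$: some $\rho'\in\mathrm{Suff}(\rho)$; $\langle\bar B\rangle\psi$: some trace $\rho'$ with $\rho\in\mathrm{Pref}(\rho')$; $\langle\bar E\rangle\psi$: some trace $\rho'$ with $\rho\in\mathrm{Suff}(\rho')$. $K\models_{\mathsf{st}}\psi$ iff every initial trace satisfies $\psi$; $K\models_{\mathsf{ct}}\psi$ iff $C(K)\models_{\mathsf{st}}\psi$. Trace-based: for an infinite path $\pi$, intervals $[i,j]$, $0\le i\le j$; $[i,j]\models p$ iff $p\in\mu(\pi(h))$ for all $i\le h\le j$; $[x,y]\models\langle B\rangle\psi$ iff $[x,z]\models\psi$ for some $x\le z<y$; $\langle E\rangle$: $[v,y]$ for some $x<v\le y$; $\langle\bar B\rangle$: $[x,z]$ for some $z>y$; $\langle\bar E\rangle$: $[v,y]$ for some $v<x$. $K\models_{\mathsf{lin}}\psi$ iff for every initial infinite path $\pi$ and $i\ge0$, $[0,i]\models\psi$ in $\pi$. *)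

(* Defs.v *)
From Stdlib Require Import List Arith Lia.
Import ListNotations.

(* K = (AP, S, delta, mu, s0) with delta left-total.  mu s a <-> a \in mu(s). *)
Record kripke (AP : Type) := Kripke {
  kS : Type;
  kdelta : kS -> kS -> Prop;
  kmu : kS -> AP -> Prop;
  ks0 : kS;
  ktotal : forall s, exists t, kdelta s t
}.
Arguments kS {AP}.
Arguments kdelta {AP}.
Arguments kmu {AP}.
Arguments ks0 {AP}.

Definition finite_kripke {AP : Type} (K : kripke AP) : Prop :=
  exists l : list (kS K), forall s, In s l.

Fixpoint is_path {S : Type} (d : S -> S -> Prop) (l : list S) : Prop :=
  match l with
  | [] => False
  | [_] => True
  | x :: ((y :: _) as t) => d x y /\ is_path d t
  end.

Definition is_trace {AP} (K : kripke AP) (rho : list (kS K)) : Prop :=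
  is_path (kdelta K) rho.

Definition is_initial_trace {AP} (K : kripke AP) (rho : list (kS K)) : Prop :=
  is_trace K rho /\ exists t, rho = ks0 K :: t.

Definition is_proper_prefix {S : Type} (rho' rho : list S) : Prop :=
  rho' <> [] /\ exists t, t <> [] /\ rho = rho' ++ t.

Definition is_proper_suffix {S : Type} (rho' rho : list S) : Prop :=
  rho' <> [] /\ exists t, t <> [] /\ rho = t ++ rho'.

(* All Allen modalities are definable (non-strict semantics) from
   <B>, <E>, <B-bar>, <E-bar>; we take these four as primitive. *)
Inductive formula (AP : Type) : Type :=
| Prop_ : AP -> formula AP
| Neg : formula AP -> formula AP
| And : formula AP -> formula AP -> formula AP
| DiaB : formula AP -> formula AP
| DiaE : formula AP -> formula AP
| DiaBbar : formula AP -> formula AP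
| DiaEbar : formula AP -> formula AP.
Arguments Prop_ {AP}. Arguments Neg {AP}. Arguments And {AP}.
Arguments DiaB {AP}. Arguments DiaE {AP}. Arguments DiaBbar {AP}. Arguments DiaEbar {AP}.

Fixpoint holds_st {AP} (K : kripke AP) (rho : list (kS K)) (f : formula AP) : Prop :=
  match f with
  | Prop_ p => forall s, In s rho -> kmu K s p
  | Neg g => ~ holds_st K rho g
  | And g h => holds_st K rho g /\ holds_st K rho h
  | DiaB g => exists rho', is_proper_prefix rho' rho /\ holds_st K rho' g
  | DiaE g => exists rho', is_proper_suffix rho' rho /\ holds_st K rho' g
  | DiaBbar g => exists rho', is_trace K rho' /\ is_proper_prefix rho rho' /\ holds_st K rho' g
  | DiaEbar g => exists rho', is_trace K rho' /\ is_proper_suffix rho rho' /\ holds_st K rho' g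
  end.

Definition models_st {AP} (K : kripke AP) (f : formula AP) : Prop :=
  forall rho, is_initial_trace K rho -> holds_st K rho f.

Lemma is_path_app_single {S : Type} (d : S -> S -> Prop) (l : list S) (x y : S) :
  is_path d (l ++ [x]) -> d x y -> is_path d (l ++ [x; y]).
Proof.
  induction l as [|a l IH]; simpl.
  - intros _ H; split; auto.
  - destruct l as [|b l]; simpl in *.
    + intros [H1 _] H; split; [exact H1| split; auto].
    + intros [H1 H2] H; split; [exact H1| apply IH; auto].
Qed.

Lemma is_path_snoc_total {AP} (K : kripke AP) (rho : list (kS K)) :
  is_trace K rho -> exists s, is_trace K (rho ++ [s]).
Proof.
  intros H. destruct (@exists_last _ rho) as [l [x E]].
  - intro E; subst; exact H.
  - subst rho. destruct (ktotal AP K x) as [y Hy]. exists y.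
    rewrite <- app_assoc. simpl. apply is_path_app_single; auto.
Qed.

Definition ct_state {AP} (K : kripke AP) : Type :=
  { rho : list (kS K) | is_initial_trace K rho }.

Definition ct_delta {AP} (K : kripke AP) (r r' : ct_state K) : Prop :=
  exists s, proj1_sig r' = proj1_sig r ++ [s].

Definition ct_mu {AP} (K : kripke AP) (r : ct_state K) (a : AP) : Prop :=
  kmu K (last (proj1_sig r) (ks0 K)) a.

Definition ct_root {AP} (K : kripke AP) : ct_state K.
Proof. exists [ks0 K]. split; [exact I | exists []; reflexivity]. Defined.

Lemma ct_total {AP} (K : kripke AP) : forall r, exists r', ct_delta K r r'.
Proof.
  intros [rho [Hp [t Ht]]].
  destruct (is_path_snoc_total K rho Hp) as [s Hs].
  assert (Hi : is_initial_trace K (rho ++ [s])).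
  { split; [exact Hs| exists (t ++ [s]); subst; reflexivity]. }
  exists (exist _ (rho ++ [s]) Hi). exists s. reflexivity.
Qed.

Definition comp_tree {AP} (K : kripke AP) : kripke AP :=
  @Kripke AP (ct_state K) (ct_delta K) (ct_mu K) (ct_root K) (ct_total K).

Definition models_ct {AP} (K : kripke AP) (f : formula AP) : Prop :=
  models_st (comp_tree K) f.

Definition is_initial_inf_path {AP} (K : kripke AP) (pi : nat -> kS K) : Prop :=
  pi 0 = ks0 K /\ forall i, kdelta K (pi i) (pi (S i)).

(* holds on the interval [i,j] (with i <= j) of pi *)
Fixpoint holds_lin {AP} (K : kripke AP) (pi : nat -> kS K) (i j : nat)
         (f : formula AP) : Prop :=
  match f with
  | Prop_ p => forall h, i <= h <= j -> kmu K (pi h) p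
  | Neg g => ~ holds_lin K pi i j g
  | And g h => holds_lin K pi i j g /\ holds_lin K pi i j h
  | DiaB g => exists z, i <= z < j /\ holds_lin K pi i z g
  | DiaE g => exists v, i < v <= j /\ holds_lin K pi v j g
  | DiaBbar g => exists z, j < z /\ holds_lin K pi i z g
  | DiaEbar g => exists v, v < i /\ holds_lin K pi v j g
  end.

Definition models_lin {AP} (K : kripke AP) (f : formula AP) : Prop :=
  forall pi, is_initial_inf_path K pi -> forall i, holds_lin K pi 0 i f.

(* Main.v *)
Require Import Defs.
From Stdlib Require Import List Arith Lia.
Import ListNotations.

Lemma lin_transfer {AP} (K1 K2 : kripke AP) (pi1 : nat -> kS K1) (pi2 : nat -> kS K2)
  (H : forall h a, kmu K1 (pi1 h) a <-> kmu K2 (pi2 h) a) :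
  forall f i j, holds_lin K1 pi1 i j f <-> holds_lin K2 pi2 i j f.
Proof.
  induction f as [p|g IH|g IHg h IHh|g IH|g IH|g IH|g IH]; intros i j; simpl.
  - split; intros Hp k Hk; [apply (proj1 (H k p)) | apply (proj2 (H k p))]; auto.
  - specialize (IH i j); tauto.
  - specialize (IHg i j); specialize (IHh i j); tauto.
  - split; intros [z [Hz Hg]]; exists z; (split; [exact Hz| apply IH; exact Hg]).
  - split; intros [z [Hz Hg]]; exists z; (split; [exact Hz| apply IH; exact Hg]).
  - split; intros [z [Hz Hg]]; exists z; (split; [exact Hz| apply IH; exact Hg]).
  - split; intros [z [Hz Hg]]; exists z; (split; [exact Hz| apply IH; exact Hg]).
Qed.

Lemma models_lin_eq {AP} (K1 K2 : kripke AP)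
  (H12 : forall pi1, is_initial_inf_path K1 pi1 -> exists pi2, is_initial_inf_path K2 pi2 /\
          forall h a, kmu K1 (pi1 h) a <-> kmu K2 (pi2 h) a)
  (H21 : forall pi2, is_initial_inf_path K2 pi2 -> exists pi1, is_initial_inf_path K1 pi1 /\
          forall h a, kmu K1 (pi1 h) a <-> kmu K2 (pi2 h) a) :
  forall phi, models_lin K1 phi <-> models_lin K2 phi.
Proof.
  intros phi; split; intros Hm pi Hpi i.
  - destruct (H21 pi Hpi) as [pi1 [Hp1 Hl]].
    apply (proj1 (lin_transfer K1 K2 pi1 pi Hl phi 0 i)). apply Hm; auto.
  - destruct (H12 pi Hpi) as [pi2 [Hp2 Hl]].
    apply (proj2 (lin_transfer K1 K2 pi pi2 Hl phi 0 i)). apply Hm; auto.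
Qed.

Lemma path_snoc_step {S} (d : S -> S -> Prop) : forall l y, l <> [] ->
  is_path d (l ++ [y]) -> forall z, d (last l z) y.
Proof.
  induction l as [|u l IH]; intros y Hne Hp z; [congruence|].
  destruct l as [|v l].
  - simpl in Hp. simpl. tauto.
  - simpl in Hp. destruct Hp as [_ Hp].
    change (d (last (v :: l) z) y). apply IH; [discriminate| exact Hp].
Qed.

Definition Tm {AP} (a : AP) : formula AP := Neg (And (Prop_ a) (Neg (Prop_ a))).
Lemma Tm_st {AP} (K : kripke AP) rho a : holds_st K rho (Tm a).
Proof. simpl; tauto. Qed.

Lemma pp_len {S} (r' r : list S) : is_proper_prefix r' r -> 0 < length r' < length r.
Proof.
  intros [Hne [t [Ht E]]]. subst. rewrite length_app.
  destruct r'; [congruence|]. destruct t; [congruence|]. simpl; lia.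
Qed.

Lemma KA_total : forall s : bool, exists t, (fun _ y : bool => y = false) s t.
Proof. intros; exists false; reflexivity. Qed.
Definition KA (AP : Type) : kripke AP :=
  @Kripke AP bool (fun _ y => y = false) (fun _ _ => True) true KA_total.
Lemma KB_total : forall s : unit, exists t, (fun _ _ : unit => True) s t.
Proof. intros; exists tt; exact I. Qed.
Definition KB (AP : Type) : kripke AP :=
  @Kripke AP unit (fun _ _ => True) (fun _ _ => True) tt KB_total.

Lemma part1 (AP : Type) (p : AP) :
  exists psi : formula AP, ~ exists phi : formula AP,
     forall K : kripke AP, finite_kripke K ->
       (models_lin K phi <-> models_st K psi).
Proof.
  exists (DiaEbar (Tm p)). intros [phi Hphi].
  assert (FA : finite_kripke (KA AP)).
  { exists [true; false]; intros []; simpl; auto. }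
  assert (FB : finite_kripke (KB AP)).
  { exists [tt]; intros []; simpl; auto. }
  assert (Heq : models_lin (KA AP) phi <-> models_lin (KB AP) phi).
  { apply models_lin_eq.
    - intros pi1 _. exists (fun _ => tt). split.
      + split; [reflexivity| intros; exact I].
      + intros; simpl; tauto.
    - intros pi2 _. exists (fun n => match n with 0 => true | S _ => false end). split.
      + split; [reflexivity| intros; reflexivity].
      + intros; simpl; tauto. }
  assert (HB : models_st (KB AP) (DiaEbar (Tm p))).
  { intros rho [Hp [t Ht]]. simpl in Ht. subst rho. simpl.
    exists (tt :: tt :: t). split.
    - unfold is_trace. simpl. split; [exact I| exact Hp].
    - split.
      + split; [discriminate| exists [tt]; split; [discriminate| reflexivity]].
      + simpl; tauto. }
  apply (proj2 (Hphi _ FB)) in HB. apply (proj2 Heq) in HB.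
  apply (proj1 (Hphi _ FA)) in HB.
  assert (Hi : is_initial_trace (KA AP) [true]).
  { split; [exact I| exists []; reflexivity]. }
  destruct (HB _ Hi) as [rho' [Htr [[_ [t [Htne E]]] _]]].
  subst rho'. apply (path_snoc_step _ t true Htne) with (z := true) in Htr.
  simpl in Htr. discriminate.
Qed.

Inductive st1 := s0 | sx | sa | sb.
Definition d1 (u v : st1) : Prop :=
  match u, v with
  | s0, sx | sx, sa | sx, sb | sa, sa | sb, sb => True
  | _, _ => False end.
Lemma d1_total : forall u, exists v, d1 u v.
Proof. intros []; [exists sx|exists sa|exists sa|exists sb]; exact I. Qed.
Definition K1 (AP : Type) : kripke AP :=
  @Kripke AP st1 d1 (fun u _ => u = sa) s0 d1_total.

Inductive st2 := t0 | x1 | x2 | a2.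
Definition d2 (u v : st2) : Prop :=
  match u, v with
  | t0, x1 | t0, x2 | x1, a2 | a2, a2 | x2, x2 => True
  | _, _ => False end.
Lemma d2_total : forall u, exists v, d2 u v.
Proof. intros []; [exists x1|exists a2|exists x2|exists a2]; exact I. Qed.
Definition K2 (AP : Type) : kripke AP :=
  @Kripke AP st2 d2 (fun u _ => u = a2) t0 d2_total.

Lemma K1_path (pi : nat -> st1) : pi 0 = s0 -> (forall i, d1 (pi i) (pi (S i))) ->
  pi 1 = sx /\ ((forall n, pi (S (S n)) = sa) \/ (forall n, pi (S (S n)) = sb)).
Proof.
  intros H0 Hd.
  assert (H1 : pi 1 = sx).
  { generalize (Hd 0); rewrite H0; destruct (pi 1); simpl; intros; try contradiction; reflexivity. }
  split; [exact H1|].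
  generalize (Hd 1); rewrite H1; destruct (pi 2) eqn:E2; simpl; intros; try contradiction.
  - left; induction n; [exact E2|].
    generalize (Hd (S (S n))); rewrite IHn; destruct (pi (S (S (S n)))); simpl; intros; try contradiction; reflexivity.
  - right; induction n; [exact E2|].
    generalize (Hd (S (S n))); rewrite IHn; destruct (pi (S (S (S n)))); simpl; intros; try contradiction; reflexivity.
Qed.

Lemma K2_path (pi : nat -> st2) : pi 0 = t0 -> (forall i, d2 (pi i) (pi (S i))) ->
  (pi 1 = x1 /\ forall n, pi (S (S n)) = a2) \/ (forall n, pi (S n) = x2).
Proof.
  intros H0 Hd.
  generalize (Hd 0); rewrite H0; destruct (pi 1) eqn:E1; simpl; intros; try contradiction.
  - left; split; [reflexivity|].
    induction n.
    + generalize (Hd 1); rewrite E1; destruct (pi 2); simpl; intros; try contradiction; reflexivity.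
    + generalize (Hd (S (S n))); rewrite IHn; destruct (pi (S (S (S n)))); simpl; intros; try contradiction; reflexivity.
  - right; induction n; [exact E1|].
    generalize (Hd (S n)); rewrite IHn; destruct (pi (S (S n))); simpl; intros; try contradiction; reflexivity.
Qed.

Definition Or {AP} (f g : formula AP) : formula AP := Neg (And (Neg f) (Neg g)).

Definition c1_1 (AP : Type) : ct_state (K1 AP).
Proof. refine (exist _ [s0; sx] _). split; [repeat split | exists [sx]; reflexivity]. Defined.
Definition c1_2 (AP : Type) : ct_state (K1 AP).
Proof. refine (exist _ [s0; sx; sa] _). split; [repeat split | exists [sx; sa]; reflexivity]. Defined.
Definition c2_1 (AP : Type) : ct_state (K2 AP).
Proof. refine (exist _ [t0; x2] _). split; [repeat split | exists [x2]; reflexivity]. Defined.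

Lemma K2_inv AP : forall L (c : ct_state (K2 AP)), is_path (ct_delta (K2 AP)) (c :: L) ->
  last (proj1_sig c) t0 = x2 -> forall r, In r (c :: L) -> last (proj1_sig r) t0 = x2.
Proof.
  induction L as [|d L IH]; intros c Hp Hc r Hr.
  - destruct Hr as [<-|[]]; exact Hc.
  - destruct Hp as [[s Es] Hp']. destruct Hr as [<-|Hr]; [exact Hc|].
    apply (IH d Hp'); auto.
    rewrite Es, last_last.
    pose proof (proj1 (proj2_sig d)) as Hd. rewrite Es in Hd.
    assert (Hne : proj1_sig c <> []).
    { intro E. pose proof (proj1 (proj2_sig c)) as Hc'. rewrite E in Hc'. exact Hc'. }
    apply (path_snoc_step _ _ s Hne) with (z := t0) in Hd.
    change (d2 (last (proj1_sig c) t0) s) in Hd. rewrite Hc in Hd.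
    destruct s; simpl in Hd; try contradiction; reflexivity.
Qed.

Lemma part2 (AP : Type) (p : AP) :
  exists psi' : formula AP, ~ exists phi : formula AP,
     forall K : kripke AP, finite_kripke K ->
       (models_lin K phi <-> models_ct K psi').
Proof.
  exists (Or (DiaB (DiaB (Tm p))) (DiaBbar (DiaE (Prop_ p)))). intros [phi Hphi].
  assert (F1 : finite_kripke (K1 AP)).
  { exists [s0; sx; sa; sb]; intros []; simpl; auto. }
  assert (F2 : finite_kripke (K2 AP)).
  { exists [t0; x1; x2; a2]; intros []; simpl; auto. }
  assert (Heq : models_lin (K1 AP) phi <-> models_lin (K2 AP) phi).
  { apply models_lin_eq.
    - intros pi1 [H0 Hd]; simpl in H0. destruct (K1_path pi1 H0 Hd) as [H1 [Hn|Hn]].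
      + exists (fun n => match n with 0 => t0 | 1 => x1 | _ => a2 end). split.
        * split; [reflexivity| intros [|[|i]]; exact I].
        * intros [|[|h]] a; simpl; [rewrite H0|rewrite H1|rewrite Hn]; split; intro; congruence.
      + exists (fun n => match n with 0 => t0 | _ => x2 end). split.
        * split; [reflexivity| intros [|[|i]]; exact I].
        * intros [|[|h]] a; simpl; [rewrite H0|rewrite H1|rewrite Hn]; split; intro; congruence.
    - intros pi2 [H0 Hd]; simpl in H0. destruct (K2_path pi2 H0 Hd) as [[H1 Hn]|Hn].
      + exists (fun n => match n with 0 => s0 | 1 => sx | _ => sa end). split.
        * split; [reflexivity| intros [|[|i]]; exact I].
        * intros [|[|h]] a; simpl; [rewrite H0|rewrite H1|rewrite Hn]; split; intro; congruence.
      + exists (fun n => match n with 0 => s0 | 1 => sx | _ => sb end). split.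
        * split; [reflexivity| intros [|[|i]]; exact I].
        * intros [|[|h]] a; simpl; [rewrite H0|rewrite (Hn 0)|rewrite (Hn (S h))]; split; intro; congruence. }
  assert (HK1 : models_ct (K1 AP) (Or (DiaB (DiaB (Tm p))) (DiaBbar (DiaE (Prop_ p))))).
  { intros R [HR [t Ht]]. subst R. destruct t as [|r1 [|r2 t]].
    - cbn [holds_st Or]. intros [_ HB]; apply HB.
      exists [ks0 (comp_tree (K1 AP)); c1_1 AP; c1_2 AP]. split; [|split].
      + split; [exists sx; reflexivity| split; [exists sa; reflexivity| exact I]].
      + split; [discriminate| exists [c1_1 AP; c1_2 AP]; split; [discriminate|reflexivity]].
      + exists [c1_2 AP]. split.
        * split; [discriminate| exists [ks0 (comp_tree (K1 AP)); c1_1 AP]; split; [discriminate|reflexivity]].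
        * intros s [<-|[]]. reflexivity.
    - destruct HR as [[s Es] _].
      assert (E1 : proj1_sig r1 = [s0; sx]).
      { pose proof (proj1 (proj2_sig r1)) as Hp. rewrite Es in Hp.
        rewrite Es. destruct s; destruct Hp as [Hp _]; try contradiction; reflexivity. }
      cbn [holds_st Or]. intros [_ HB]; apply HB.
      exists [ks0 (comp_tree (K1 AP)); r1; c1_2 AP]. split; [|split].
      + split; [exists s; exact Es| split; [exists sa; rewrite E1; reflexivity| exact I]].
      + split; [discriminate| exists [c1_2 AP]; split; [discriminate|reflexivity]].
      + exists [c1_2 AP]. split.
        * split; [discriminate| exists [ks0 (comp_tree (K1 AP)); r1]; split; [discriminate|reflexivity]].
        * intros s' [<-|[]]. reflexivity.
    - cbn [holds_st Or]. intros [HA _]; apply HA.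
      exists [ks0 (comp_tree (K1 AP)); r1]. split.
      + split; [discriminate| exists (r2 :: t); split; [discriminate|reflexivity]].
      + exists [ks0 (comp_tree (K1 AP))]. split.
        * split; [discriminate| exists [r1]; split; [discriminate|reflexivity]].
        * simpl; tauto. }
  apply (proj2 (Hphi _ F1)) in HK1. apply (proj1 Heq) in HK1.
  apply (proj1 (Hphi _ F2)) in HK1.
  set (root := ks0 (comp_tree (K2 AP))).
  assert (Hi : is_initial_trace (comp_tree (K2 AP)) [root; c2_1 AP]).
  { split; [split; [exists x2; reflexivity| exact I] | exists [c2_1 AP]; reflexivity]. }
  specialize (HK1 _ Hi). cbn [holds_st Or] in HK1. apply HK1. split.
  - intros [rho' [Hpp [rho'' [Hpp' _]]]].
    apply pp_len in Hpp. apply pp_len in Hpp'. simpl in Hpp. destruct rho' as [|u [|v w]]; destruct rho'' as [|u' [|v' w']]; simpl in *; lia.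
  - intros [R' [Htr [[_ [t [Htne Heq1]]] [rho'' [[Hne [u [Hune Heq2]]] Hprop]]]]].
    destruct rho'' as [|r rs]; [congruence|].
    specialize (Hprop r (or_introl eq_refl)).
    change (last (proj1_sig r) t0 = a2) in Hprop.
    assert (Hin : In r R') by (rewrite Heq2; apply in_or_app; right; left; reflexivity).
    rewrite Heq1 in Hin, Htr. simpl in Hin. destruct Hin as [<-|Hin].
    + discriminate Hprop.
    + destruct Htr as [_ Htr].
      rewrite (K2_inv AP t (c2_1 AP) Htr eq_refl r Hin) in Hprop. discriminate.
Qed.

Theorem proposition5p3 (AP : Type)
  (HAPfin : exists l : list AP, forall a, In a l)
  (HAPne : inhabited AP) :
  (exists psi : formula AP, ~ exists phi : formula AP,
     forall K : kripke AP, finite_kripke K ->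
       (models_lin K phi <-> models_st K psi))
  /\
  (exists psi' : formula AP, ~ exists phi : formula AP,
     forall K : kripke AP, finite_kripke K ->
       (models_lin K phi <-> models_ct K psi')).
Proof.
  destruct HAPne as [p]. split; [apply part1 | apply part2]; exact p.
Qed.
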